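(* Let $(\Omega,\mu)$ be a measure space and let $Y$ be a uniformly monotone Banach function space on $(\Omega,\mu)$, with $\delta$ a function witnessing uniform monotonicity of $Y$. Let $0<\varepsilon<1$. Assume that $f_1$ and $f_2$ are positive elements of $Y$ such that $$\Vert f_1+f_2\Vert\le 1 \quad\text{and}\quad \frac{1}{1+\delta(\varepsilon/3)}\le \Vert f_1-f_2\Vert.$$ Then there are two positive functions $h_1,h_2\in Y$ with disjoint supports such that $\Vert h_1+h_2\Vert=1$ and $\Vert h_i-f_i\Vert<\varepsilon$ for $i=1,2$.
   Context: Let $L^0(\mu)$ denote the space of ($\mu$-a.e. equivalence classes of) real valued measurable functions on $\Omega$. A Banach space $X$ is a Banach function space on $(\Omega,\mu)$ if $X$ is an ideal in $L^0(\mu)$ and whenever $x,y\in X$ with $|x|\le|y|$ a.e., then $\Vert x\Vert\le\Vert y\Vert$. A Banach lattice $E$ is uniformly monotone if for every $\varepsilon>0$ there is $\delta(\varepsilon)>0$ such that whenever $x\in E$ with $\Vert x\Vert=1$, $y\in E$, $x,y\ge 0$, the condition $\Vert x+y\Vert\le 1+\delta(\varepsilon)$ implies $\Vert y\Vert\le\varepsilon$; such a function $\delta$ is said to witness (be a modulus of) uniform monotonicity. All spaces are real. *)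

(* Defs.v *)
From HB Require Import structures.
From mathcomp Require Import all_boot all_order all_algebra.
From mathcomp Require Import all_classical all_reals all_analysis.
Set Implicit Arguments. Unset Strict Implicit. Unset Printing Implicit Defensive.
Import Order.TTheory GRing.Theory Num.Theory.
Local Open Scope classical_set_scope.
Local Open Scope ring_scope.

Section BFS.
Context {d : measure_display} {T : measurableType d} {R : realType}.
Variable mu : {measure set T -> \bar R}.

(* Elements of L^0(mu) are represented by measurable functions T -> R;
   everything below is invariant under mu-a.e. equality. *)
Definition fadd (f g : T -> R) : T -> R := fun x => f x + g x.
Definition fsub (f g : T -> R) : T -> R := fun x => f x - g x.
Definition fscale (c : R) (f : T -> R) : T -> R := fun x => c * f x.
Definition fzero : T -> R := fun _ => 0.

Definition ae_nonneg (f : T -> R) : Prop := {ae mu, forall x, 0 <= f x}.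

Definition is_BFS (X : set (T -> R)) (N : (T -> R) -> R) : Prop :=
  [/\ (forall f : T -> R, X f -> measurable_fun setT f),
      X fzero /\ (forall f g, X f -> X g -> X (fadd f g)) /\
        (forall c f, X f -> X (fscale c f)),
      (forall f g : T -> R, measurable_fun setT f -> X g ->
         {ae mu, forall x, `|f x| <= `|g x|} -> X f),
      [/\ (forall f, X f -> (N f = 0 <-> {ae mu, forall x, f x = 0})),
          (forall f g, X f -> X g -> N (fadd f g) <= N f + N g),
          (forall c f, X f -> N (fscale c f) = `|c| * N f) &
          (forall f g, X f -> X g -> {ae mu, forall x, `|f x| <= `|g x|} ->
             N f <= N g)] &
      (forall u : nat -> T -> R, (forall n, X (u n)) ->
         (forall e, 0 < e -> exists M, forall m n, (M <= m)%N -> (M <= n)%N ->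
            N (fsub (u m) (u n)) < e) ->
         exists f, X f /\ forall e, 0 < e -> exists M, forall n, (M <= n)%N ->
            N (fsub (u n) f) < e)].

Definition unif_monotone_modulus (X : set (T -> R)) (N : (T -> R) -> R)
    (delta : R -> R) : Prop :=
  forall eps, 0 < eps -> 0 < delta eps /\
    forall x y, X x -> X y -> ae_nonneg x -> ae_nonneg y -> N x = 1 ->
      N (fadd x y) <= 1 + delta eps -> N y <= eps.

End BFS.

(* Main.v *)
Require Import Defs.
From HB Require Import structures.
From mathcomp Require Import all_boot all_order all_algebra.
From mathcomp Require Import all_classical all_reals all_analysis.
From mathcomp Require Import lra.
Import Order.TTheory GRing.Theory Num.Theory.
Local Open Scope classical_set_scope.
Local Open Scope ring_scope.

Theorem lemma2p4 (d : measure_display) (T : measurableType d) (R : realType)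
  (mu : {measure set T -> \bar R}) (X : set (T -> R)) (N : (T -> R) -> R)
  (delta : R -> R) (eps : R) (f1 f2 : T -> R) :
  is_BFS mu X N ->
  unif_monotone_modulus mu X N delta ->
  0 < eps -> eps < 1 ->
  X f1 -> X f2 -> ae_nonneg mu f1 -> ae_nonneg mu f2 ->
  N (fadd f1 f2) <= 1 ->
  (1 + delta (eps / 3))^-1 <= N (fsub f1 f2) ->
  exists h1 h2 : T -> R,
    [/\ X h1, X h2, ae_nonneg mu h1 & ae_nonneg mu h2] /\
    [/\ {ae mu, forall x, h1 x = 0 \/ h2 x = 0},
        N (fadd h1 h2) = 1,
        N (fsub h1 f1) < eps &
        N (fsub h2 f2) < eps].
Proof.
move=> [Xm [X0 [XD XZ]] Xid [N0 ND NZ Nmono] _] UM eps0 eps1 Xf1 Xf2 nf1 nf2 Nf12 Nd.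
have [D0 UMe] := UM (eps / 3) ltac:(lra).
set D := delta (eps / 3) in D0 UMe Nd.
have fsubE : forall f g : T -> R, fsub f g = fadd f (fscale (-1) g).
  by move=> f g; apply: boolp.funext => x; rewrite /fsub /fadd /fscale mulN1r.
have XB : forall f g : T -> R, X f -> X g -> X (fsub f g).
  by move=> f g Xf Xg; rewrite fsubE; apply: XD => //; apply: XZ.
have Nmono' : forall f g : T -> R, X f -> X g -> (forall x, `|f x| <= `|g x|) -> N f <= N g.
  by move=> f g Xf Xg H; apply: Nmono => //; apply: aeW.
pose u := fun x => Num.max (f1 x - f2 x) 0.
pose v := fun x => Num.max (f2 x - f1 x) 0.
pose g := fun x => f1 x - u x.
have uE : forall x, u x = Num.max (f1 x - f2 x) 0 by [].
have vE : forall x, v x = Num.max (f2 x - f1 x) 0 by [].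
have u0 : forall x, 0 <= u x by move=> x; rewrite uE le_max lexx orbT.
have v0 : forall x, 0 <= v x by move=> x; rewrite vE le_max lexx orbT.
have f1E : forall x, f1 x = u x + g x by move=> x; rewrite /g; lra.
have f2E : forall x, f2 x = v x + g x.
  move=> x; rewrite /g uE vE !maxEle; case: ifP; case: ifP; move=> /= h1 h2; lra.
have uvdisj : forall x, u x = 0 \/ v x = 0.
  move=> x; rewrite uE vE !maxEle; case: ifP; case: ifP; move=> /= h1 h2; lra.
have Xu : X u.
  apply: (Xid u (fsub f1 f2)).
  - rewrite /u; apply: (measurable_realfun.measurable_maxr (f := fun x => f1 x - f2 x) (g := fun=> 0)).
      by apply: measurable_realfun.measurable_funB; apply: Xm.
    exact: measurable_cst.
  - exact: XB.
  apply: aeW => x; rewrite /fsub uE maxEle; case: ifP => h.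
    by rewrite normr0.
  by [].
have Xg : X g by apply: XB.
have Xv : X v.
  have -> : v = fsub f2 g by apply: boolp.funext => x; rewrite /fsub f2E; lra.
  exact: XB.
have g0 : ae_nonneg mu g.
  apply: (filterS2 _ _ nf1 nf2) => x h1 h2; rewrite /g uE maxEle.
  case: ifP => /= h; lra.
pose w := fadd u v.
have Xw : X w by apply: XD.
have wE : forall x, w x = `|f1 x - f2 x|.
  move=> x; rewrite /w /fadd uE vE !maxEle; case: ifP; case: ifP; move=> /= h1 h2.
  - have -> : f1 x - f2 x = 0 by lra.
    rewrite normr0; lra.
  - by rewrite ler0_norm; lra.
  - by rewrite ger0_norm; lra.
  - lra.
have Nw : N w = N (fsub f1 f2).
  have Xs := XB _ _ Xf1 Xf2.
  apply/eqP; rewrite eq_le; apply/andP; split; apply: Nmono' => // x;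
    by rewrite wE /fsub normr_id.
have Dpos : 0 < (1 + D)^-1 by rewrite invr_gt0; lra.
have a0 : 0 < N w by rewrite Nw; apply: lt_le_trans Dpos Nd.
have a12 : N w <= N (fadd f1 f2).
  have Xf12 := XD _ _ Xf1 Xf2.
  apply: Nmono => //.
  apply: (filterS2 _ _ g0 g0) => x hg _; rewrite /fadd f1E f2E /w /fadd.
  rewrite !ger0_norm; [lra| |]; have := u0 x; have := v0 x; lra.
have a1 : N w <= 1 by apply: le_trans a12 Nf12.
set a := N w in a0 a1 Nw a12.
have ba : a^-1 * a = 1 by rewrite mulVf // gt_eqF.
have b0 : 0 < a^-1 by rewrite invr_gt0.
set b := a^-1 in ba b0.
have bD : b <= 1 + D.
  have : (1 + D)^-1 * (1 + D) = 1 by rewrite mulVf //; apply: lt0r_neq0; lra.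
  set c := (1 + D)^-1 in Nd Dpos *; nra.
pose x := fscale b w.
have Xx : X x by apply: XZ.
have Nx : N x = 1 by rewrite NZ // ger0_norm ?ba // ltW.
have nx : ae_nonneg mu x.
  by apply: aeW => t; rewrite /x /fscale /w /fadd; have := u0 t; have := v0 t; nra.
have xE : x = fscale b w by [].
clearbody x.
have DE : D <= eps / 3.
  have XDx : X (fscale D x) by apply: XZ.
  have nDx : ae_nonneg mu (fscale D x).
    by apply: (filterS2 _ _ nx nx) => t h _; rewrite /fscale; nra.
  have := UMe x (fscale D x) Xx XDx nx nDx Nx.
  have -> : fadd x (fscale D x) = fscale (1 + D) x.
    by apply: boolp.funext => t; rewrite /fadd /fscale; lra.
  rewrite !NZ // Nx !mulr1 !ger0_norm; [|lra|lra].
  by apply.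
have Ng : N g <= a * eps / 6.
  have Xy : X (fscale (2 * b) g) by apply: XZ.
  have := UMe x (fscale (2 * b) g) Xx Xy nx.
  have -> : fadd x (fscale (2 * b) g) = fscale b (fadd f1 f2).
    apply: boolp.funext => t; rewrite xE /w /fadd /fscale f1E f2E; lra.
  rewrite !NZ //; last by apply: XD.
  rewrite !ger0_norm; [|lra|lra].
  have N12 : 0 <= N (fadd f1 f2) by lra.
  move=> /(_ _ _ _) H.
  have : 2 * b * N g <= eps / 3.
    apply: H => //.
      by apply: (filterS2 _ _ g0 g0) => t h _; rewrite /fscale; nra.
    nra.
  move=> Hb; nra.
have Nu : N u <= a.
  apply: Nmono' => // t; rewrite /w /fadd !ger0_norm //; have := u0 t; have := v0 t; lra.
have Nv : N v <= a.
  apply: Nmono' => // t; rewrite /w /fadd !ger0_norm //; have := u0 t; have := v0 t; lra.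
have N0g : 0 <= N g.
  have Nz : N (fzero : T -> R) = 0.
    have -> : (fzero : T -> R) = fscale 0 fzero by apply: boolp.funext => t; rewrite /fscale mul0r.
    by rewrite NZ // normr0 mul0r.
  rewrite -Nz; apply: Nmono' => // t; rewrite /fzero normr0 //.
have ab : a <= 1 by [].
have Da : 1 - a <= D.
  have : (1 + D) * a >= 1 by nra.
  nra.
exists (fscale b u), (fscale b v); split; [split|split].
- exact: XZ.
- exact: XZ.
- by apply: aeW => t; rewrite /fscale; have := u0 t; nra.
- by apply: aeW => t; rewrite /fscale; have := v0 t; nra.
- by apply: aeW => t; rewrite /fscale; case: (uvdisj t) => ->; rewrite mulr0; [left|right].
- have -> : fadd (fscale b u) (fscale b v) = x.
    by rewrite xE; apply: boolp.funext => t; rewrite /fadd /fscale /w /fadd mulrDr.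
  exact: Nx.
- have -> : fsub (fscale b u) f1 = fadd (fscale (b - 1) u) (fscale (-1) g).
    by apply: boolp.funext => t; rewrite /fsub /fadd /fscale f1E; lra.
  apply: le_lt_trans; first by apply: ND; apply: XZ.
  rewrite !NZ // normrN normr1 mul1r ger0_norm; last by nra.
  nra.
- have -> : fsub (fscale b v) f2 = fadd (fscale (b - 1) v) (fscale (-1) g).
    by apply: boolp.funext => t; rewrite /fsub /fadd /fscale f2E; lra.
  apply: le_lt_trans; first by apply: ND; apply: XZ.
  rewrite !NZ // normrN normr1 mul1r ger0_norm; last by nra.
  nra.
Qed.
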